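(* For any real continuous function $f\in C(\Omega)$, $$\|[\mathcal D,\pi(M_f)]\|=\Big|\sqrt{L|Kf-f|^2}\Big|_\infty=\sup_{x\in\Omega}\sqrt{\frac{|f(x)-f(0x)|^2}{2}+\frac{|f(x)-f(1x)|^2}{2}}.$$
   Context: $\Omega=\{0,1\}^{\mathbb N}$ with the shift $\sigma$; for $a\in\{0,1\}$, $ax=(a,x_1,x_2,\dots)$. $\mu$ is the measure of maximal entropy (uniform Bernoulli product measure), $L^2(\mu)$ the Hilbert space of square-integrable functions. $|\cdot|_\infty$ is the supremum norm. Ruelle operator $L\phi(x)=\frac12(\phi(0x)+\phi(1x))$; Koopman operator $K\phi=\phi\circ\sigma$. For $f\in C(\Omega)$, $M_f$ is multiplication $g\mapsto fg$ on $L^2(\mu)$. On $\mathcal H=L^2(\mu)\times L^2(\mu)$ (norm $|(\phi_1,\phi_2)|^2=|\phi_1|^2+|\phi_2|^2$), $\mathcal D=\begin{pmatrix}0&K\\ L&0\end{pmatrix}$ and $\pi(A)=\begin{pmatrix}A&0\\0&A\end{pmatrix}$; $[\mathcal D,\pi(A)]=\mathcal D\pi(A)-\pi(A)\mathcal D$. $\|\cdot\|$ is the operator norm. *)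

(* Defs.v *)
From HB Require Import structures.
From mathcomp Require Import all_boot all_order all_algebra.
From mathcomp Require Import all_classical all_reals.
From mathcomp Require Import topology normedtype cantor measure lebesgue_measure lebesgue_integral.
Set Implicit Arguments. Unset Strict Implicit. Unset Printing Implicit Defensive.
Import Order.TTheory GRing.Theory Num.Theory.
Import numFieldNormedType.Exports.
Local Open Scope classical_set_scope.
Local Open Scope ring_scope.

(* Omega = {0,1}^N (false = 0, true = 1), product topology (cantor_space),
   equipped with its Borel sigma-algebra (generated by the open sets). *)
Definition Omega : Type := g_sigma_algebraType (@open cantor_space).

Definition ocons (a : bool) (x : Omega) : Omega :=
  fun n => if n is k.+1 then x k else a.
Definition oshift (x : Omega) : Omega := fun n => x n.+1.

Definition cylinder (n : nat) (w : nat -> bool) : set Omega :=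
  [set x | forall i, (i < n)%N -> x i = w i].

Definition is_uniform_bernoulli {R : realType} (mu : {measure set Omega -> \bar R}) :=
  forall n w, mu (cylinder n w) = ((2 ^- n : R)%:E).

Section Ops.
Context {R : realType}.
Definition ruelle (phi : Omega -> R) : Omega -> R :=
  fun x => (phi (ocons false x) + phi (ocons true x)) / 2.
Definition koopman (phi : Omega -> R) : Omega -> R := fun x => phi (oshift x).
Definition mult (f : Omega -> R) (g : Omega -> R) : Omega -> R := fun x => f x * g x.

Definition pairH := ((Omega -> R) * (Omega -> R))%type.
Definition Dop (p : pairH) : pairH := (koopman p.2, ruelle p.1).
Definition piop (A : (Omega -> R) -> Omega -> R) (p : pairH) : pairH :=
  (A p.1, A p.2).
Definition commutator (T S : pairH -> pairH) (p : pairH) : pairH :=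
  ((T (S p)).1 - (S (T p)).1, (T (S p)).2 - (S (T p)).2).

Variable mu : {measure set Omega -> \bar R}.
Definition inL2 (phi : Omega -> R) :=
  measurable_fun [set: Omega] phi /\ (\int[mu]_x ((phi x ^+ 2)%:E) < +oo)%E.
Definition L2sq (phi : Omega -> R) : R := fine (\int[mu]_x ((phi x ^+ 2)%:E)).
Definition Hnorm (p : pairH) : R := Num.sqrt (L2sq p.1 + L2sq p.2).
Definition opnorm (T : pairH -> pairH) : R :=
  sup [set Hnorm (T p) | p in [set p : pairH | inL2 p.1 /\ inL2 p.2 /\ Hnorm p <= 1]].
End Ops.

Definition supnorm {R : realType} (g : Omega -> R) : R := sup (range (fun x => `|g x|)).

(* Main.v *)
Require Import Defs.
From HB Require Import structures.
From mathcomp Require Import all_boot all_order all_algebra.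
From mathcomp Require Import all_classical all_reals.
From mathcomp Require Import topology normedtype cantor measure lebesgue_measure lebesgue_integral measurable_realfun.
From mathcomp Require Import interval_inference ring lra numfun.
Import Order.TTheory GRing.Theory Num.Theory.
Import numFieldNormedType.Exports.
Local Open Scope classical_set_scope.
Local Open Scope ring_scope.



Lemma cyl_nbhs (x : cantor_space) n : nbhs x (cylinder n x).
Proof.
elim: n => [|n IH].
  have -> : cylinder 0 x = setT by apply/seteqP; split=> y // _ i; rewrite ltn0.
  exact: filterT.
have : nbhs x (proj n @^-1` [set x n]).
  apply: open_nbhs_nbhs; split => //.
  apply: open_comp; [move=> + _; exact: proj_continuous| apply: discrete_open].
move=> h; apply: filterS (filterI IH h) => y [h1 h2] i.
rewrite ltnS leq_eqVlt => /predU1P[->|ilt]; last exact: h1.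
by move: h2; rewrite /proj /= => ->.
Qed.

Lemma nbhs_cyl (x : cantor_space) U : nbhs x U -> exists n, cylinder n x `<=` U.
Proof.
pose F := filter_from [set: nat] (fun n => cylinder n x).
have FF : Filter F.
  apply: filter_from_filter; first by exists 0%N.
  move=> i j _ _; exists (maxn i j) => //= y hy; split => k hk; apply: hy;
  apply: (leq_trans hk); [exact: leq_maxl | exact: leq_maxr].
have : F --> x.
  apply/cvg_sup => N V [W] [[W'] oW <-] WfN WV.
  exists N.+1 => // y hy; apply: WV => /=.
  by rewrite /proj /= hy.
move=> /(_ U) h /h [n _ hn]; by exists n.
Qed.



Lemma cyl_open n w : @open cantor_space (cylinder n w).
Proof.
rewrite openE => y hy.
have -> : cylinder n w = cylinder n y.
  by apply/seteqP; split => z hz i hi; rewrite hz // hy.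
exact: cyl_nbhs.
Qed.

Lemma cyl_meas n w : measurable (cylinder n w : set Omega).
Proof. by apply: sub_sigma_algebra; exact: cyl_open. Qed.

Definition Gcyl : set (set Omega) :=
  [set A | A = set0 \/ exists n w, A = cylinder n w].

Lemma open_Gcyl (U : set cantor_space) : open U -> <<s Gcyl >> (U : set Omega).
Proof.
move=> oU.
pose S (k : nat) : set Omega :=
  match unpickle k : option (nat * seq bool) with
  | Some p => if pselect (cylinder p.1 (nth false p.2) `<=` U)
              then cylinder p.1 (nth false p.2) else set0
  | None => set0 end.
have -> : (U : set Omega) = \bigcup_k S k.
  apply/seteqP; split => [x Ux|x [k _]].
    have : nbhs x U by move: (oU); rewrite openE; apply.
    move=> /nbhs_cyl [n hn].
    exists (pickle (n, mkseq x n)) => //.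
    have E : cylinder n (nth false (mkseq x n)) = cylinder n x.
      by apply/seteqP; split => z hz i hi; rewrite hz // nth_mkseq.
    rewrite /S pickleK /= E; case: pselect => [_ i hi //|nh]; exfalso; exact: nh.
  rewrite /S; case: (unpickle k) => // p; case: pselect => // h; exact: h.
apply: sigma_algebra_bigcup => k.
have : Gcyl (S k).
  rewrite /S; destruct (unpickle k) as [p|]; last by left.
  by case: pselect => ?; [right; exists p.1, (nth false p.2)|left].
exact: sub_sigma_algebra.
Qed.

Lemma measurableE : @measurable _ Omega = <<s Gcyl >>.
Proof.
apply/seteqP; split.
  apply: smallest_sub; first exact: smallest_sigma_algebra.
  exact: open_Gcyl.
apply: smallest_sub; first exact: smallest_sigma_algebra.
move=> A [->|[n [w ->]]]; first exact: measurable0.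
exact: cyl_meas.
Qed.



Lemma ocons_cont a : continuous (ocons a : cantor_space -> cantor_space).
Proof.
move=> x U /nbhs_cyl [n hn].
apply: (filterS _ (cyl_nbhs x n)) => y hy; apply: hn => -[|i] hi //=.
by apply: hy; apply: ltn_trans hi.
Qed.

Lemma oshift_cont : continuous (oshift : cantor_space -> cantor_space).
Proof.
move=> x U /nbhs_cyl [n hn].
apply: (filterS _ (cyl_nbhs x n.+1)) => y hy; apply: hn => i hi /=.
by rewrite /oshift hy.
Qed.

Lemma cont_meas (g : cantor_space -> cantor_space) : continuous g ->
  measurable_fun (setT : set Omega) (g : Omega -> Omega).
Proof.
move=> /continuousP cg.
apply: (@measurability _ _ Omega Omega _ _ (@open cantor_space)) => //.
move=> _ [U oU <-]; rewrite setTI; apply: sub_sigma_algebra; exact: cg.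
Qed.

Lemma ocons_meas a : measurable_fun (setT : set Omega) (ocons a).
Proof. exact: cont_meas (ocons_cont a). Qed.
Lemma oshift_meas : measurable_fun (setT : set Omega) oshift.
Proof. exact: cont_meas oshift_cont. Qed.

Lemma contR_meas (R : realType) (f : cantor_space -> R) : continuous f ->
  measurable_fun (setT : set Omega) (f : Omega -> R).
Proof.
move=> /continuousP cf; apply: (measurability _ (RGenOpens.measurableE R)).
move=> _ [_ [a [b ->] <-]]; rewrite setTI; apply: sub_sigma_algebra.
exact/cf/interval_open.
Qed.



Lemma pre_cyl a n w : ocons a @^-1` cylinder n.+1 w =
  if a == w 0%N then cylinder n (fun i => w i.+1) else set0.
Proof.
have [->|ne] := eqVneq a (w 0%N); rewrite ?eqxx ?(negbTE ne);
  apply/seteqP; split => y /=.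
- by move=> h i hi; exact: (h i.+1).
- by move=> h [|i] hi //; exact: h.
- by move=> h; move: ne; rewrite -(h 0%N) // eqxx.
- by [].
Qed.

Lemma setI_Gcyl : setI_closed Gcyl.
Proof.
move=> A B [->|[n [w ->]]] [->|[m [v ->]]]; try by left; rewrite ?set0I ?setI0.
case: (pselect (forall i, (i < minn n m)%N -> w i = v i)) => h; last first.
  left; apply/seteqP; split => // y [h1 h2]; apply: h => i.
  by rewrite leq_min => /andP[i1 i2]; rewrite -h1 // -h2.
right; exists (maxn n m), (fun i => if (i < n)%N then w i else v i).
apply/seteqP; split => y.
  move=> [h1 h2] i; rewrite leq_max => /orP[] hi.
    by rewrite hi h1.
  by case: ifP => hin; [rewrite h1|rewrite h2].
move=> hy; split => i hi.
  by rewrite hy ?hi // leq_max hi.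
have := hy i; rewrite leq_max hi orbT => /(_ isT) ->.
by case: ifP => // hin; apply: h; rewrite leq_min hin.
Qed.

Section Mid.
Variables (R : realType) (mu : {measure set Omega -> \bar R}).
Hypothesis hmu : is_uniform_bernoulli mu.

Let P a := measure_function_pushforward__canonical__measure_function_Measure mu (ocons_meas a).
Let nu := measure_add (P false) (P true).
Let mu2 := mscale (2%:R)%:nng mu.

Let cyl0 w : cylinder 0 w = setT.
Proof. by apply/seteqP; split => // y _ i. Qed.

Let muT : mu setT = 1%E.
Proof. by rewrite -(cyl0 (fun=> false)) hmu expr0 invr1. Qed.

Let nuE B : nu B = (mu (ocons false @^-1` B) + mu (ocons true @^-1` B))%E.
Proof. by rewrite /nu measure_addE. Qed.
Let mu2E B : mu2 B = (2%:E * mu B)%E.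
Proof. by []. Qed.


Lemma nu_mu2 A : measurable A -> mu2 A = nu A.
Proof.
move=> mA.
apply: (@measure_unique _ _ _ Gcyl (fun=> setT) measurableE setI_Gcyl _ _ mu2 nu _ _ A mA).
- by move=> _; right; exists 0%N, (fun=> false); rewrite cyl0.
- by apply/seteqP; split => // y _; exists 0%N.
- move=> B GB.
  transitivity (2%:E * mu B)%E; first exact: mu2E.
  transitivity (mu (ocons false @^-1` B) + mu (ocons true @^-1` B))%E; last exact/esym/nuE.
  case: GB => [->|[n [w ->]]].
    by rewrite !preimage_set0 !measure0 mule0 adde0.
  case: n => [|n].
    by rewrite cyl0 !preimage_setT muT mule1 -EFinD.
  rewrite !pre_cyl hmu.
  case: (w 0%N) => /=; rewrite measure0 ?add0e ?adde0 hmu -EFinM; congr (_%:E);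
  by rewrite exprS invfM mulrA divff // mul1r.
- move=> _; apply: (@le_lt_trans _ _ 2%:E); last exact: ltry.
  rewrite le_eqVlt; apply/orP; left; apply/eqP.
  by etransitivity; [exact: mu2E| rewrite muT mule1].
Qed.

Lemma int_split (F : Omega -> \bar R) : measurable_fun setT F -> (forall x, 0 <= F x)%E ->
  (2%:E * \int[mu]_x F x = \int[mu]_x F (ocons false x) + \int[mu]_x F (ocons true x))%E.
Proof.
move=> mF F0.
have -> : (2%:E * \int[mu]_x F x = \int[mu2]_x F x)%E.
  by rewrite ge0_integral_mscale.
transitivity (\int[nu]_x F x)%E.
  apply: eq_measure_integral => A mA _; exact: nu_mu2.
rewrite /nu ge0_integral_measure_add //.
congr (_ + _)%E.
  rewrite /P (ge0_integral_pushforward (ocons_meas false)) //= ?preimage_setT //.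
rewrite /P (ge0_integral_pushforward (ocons_meas true)) //= ?preimage_setT //.
Qed.
End Mid.



Section Meas.
Variable R : realType.
Implicit Types phi psi : Omega -> R.

Lemma ruelle_meas phi : measurable_fun setT phi -> measurable_fun setT (ruelle phi).
Proof.
move=> m; rewrite /ruelle.
apply: (@measurable_funM _ _ _ _ (fun x => phi (ocons false x) + phi (ocons true x)) (cst 2^-1)).
  apply: measurable_funD; apply: measurableT_comp => //; exact: ocons_meas.
exact: measurable_cst.
Qed.

Lemma koopman_meas phi : measurable_fun setT phi -> measurable_fun setT (koopman phi).
Proof. by move=> m; apply: measurableT_comp => //; exact: oshift_meas. Qed.

Lemma mult_meas phi psi : measurable_fun setT phi -> measurable_fun setT psi ->
  measurable_fun setT (mult phi psi).
Proof. by move=> m1 m2; exact: measurable_funM. Qed.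
End Meas.

Lemma int_ruelle (R : realType) (mu : {measure set Omega -> \bar R})
  (hmu : is_uniform_bernoulli mu) (phi : Omega -> R) :
  measurable_fun setT phi -> (forall x, 0 <= phi x) ->
  (\int[mu]_x (ruelle phi x)%:E = \int[mu]_x (phi x)%:E)%E.
Proof.
move=> m p0.
have m0 a : measurable_fun setT (fun x => phi (ocons a x)).
  by apply: measurableT_comp => //; exact: ocons_meas.
transitivity ((2^-1)%:E * (\int[mu]_x (phi (ocons false x))%:E + \int[mu]_x (phi (ocons true x))%:E))%E.
  rewrite -ge0_integralD //; try by move=> *; rewrite lee_fin.
  all: try exact/measurable_EFinP.
  rewrite -ge0_integralZl_EFin //; last 2 first.
  - by move=> x _; rewrite -EFinD lee_fin addr_ge0.
  - by apply/measurable_EFinP; exact: measurable_funD.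
  by apply: eq_integral => x _; rewrite /ruelle -EFinD -EFinM mulrC.
rewrite -(@int_split _ _ hmu (fun x => (phi x)%:E)); last 2 first.
- exact/measurable_EFinP.
- by move=> x; rewrite lee_fin.
by rewrite muleA -EFinM mulVf // mul1e.
Qed.



Section Main.
Variables (R : realType) (mu : {measure set Omega -> \bar R}).
Hypothesis hmu : is_uniform_bernoulli mu.
Variables (f : cantor_space -> R) (hf : continuous f).

Let H x := ruelle (fun y => `|koopman f y - f y| ^+ 2) x.
Let C := commutator Dop (piop (mult f)).

Lemma HE x : H x = ((f x - f (ocons false x)) ^+ 2 + (f x - f (ocons true x)) ^+ 2) / 2.
Proof. by rewrite /H /ruelle !real_normK ?num_real. Qed.

Lemma H_ge0 x : 0 <= H x.
Proof. by rewrite HE divr_ge0 // addr_ge0 // sqr_ge0. Qed.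

Let mf : measurable_fun setT (f : Omega -> R).
Proof. exact: contR_meas. Qed.

Lemma mH : measurable_fun setT H.
Proof.
apply: ruelle_meas; apply: measurable_funX; apply: measurableT_comp => //.
have h := measurable_funB (@koopman_meas _ _ mf) mf; exact: h.
Qed.

Lemma comm1 p x : (C p).1 x = (koopman f x - f x) * p.2 (oshift x).
Proof. by rewrite /C /commutator /Dop /piop /mult /koopman /= mulrBl. Qed.

Lemma comm2 p x : (C p).2 x = ((f (ocons false x) - f x) * p.1 (ocons false x)
   + (f (ocons true x) - f x) * p.1 (ocons true x)) / 2.
Proof. rewrite /C /commutator /Dop /piop /mult /ruelle /=. rewrite ?fctE /=. ring. Qed.

Lemma fbounded : exists B, forall x, `|f x| <= B.
Proof.
have := compact_bounded (continuous_compact (continuous_subspaceT hf) cantor_space_compact).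
case=> M [_ hM]; exists (M + 1) => x.
by apply: (hM (M + 1)); [lra | exists x].
Qed.

Lemma c2_bound p x : (C p).2 x ^+ 2 <= H x * ruelle (fun y => p.1 y ^+ 2) x.
Proof.
rewrite comm2 HE /ruelle.
set a := f x; set b := f (ocons false x); set c := f (ocons true x).
set u := p.1 (ocons false x); set v := p.1 (ocons true x).
have := sqr_ge0 ((b - a) * v - (c - a) * u).
nra.
Qed.

Lemma oshift_ocons a y : oshift (ocons a y) = y.
Proof. by []. Qed.

Lemma int_c1 (p : @pairH R) : measurable_fun setT p.2 ->
  (\int[mu]_x (((C p).1 x) ^+ 2)%:E = \int[mu]_x (H x * p.2 x ^+ 2)%:E)%E.
Proof.
move=> m2.
under eq_integral do rewrite comm1.
rewrite -(@int_ruelle _ _ hmu); last 2 first.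
- apply: measurable_funX; apply: measurable_funM.
    have h := measurable_funB (@koopman_meas _ _ mf) mf; exact: h.
  exact: (@koopman_meas _ _ m2).
- by move=> x; exact: sqr_ge0.
apply: eq_integral => y _; congr (_%:E).
rewrite /ruelle HE /koopman !oshift_ocons; ring.
Qed.

Lemma fine_le (a : \bar R) r : (0 <= a)%E -> (a <= r%:E)%E -> fine a <= r.
Proof. by case: a => //= x _; rewrite lee_fin. Qed.

Lemma fine_ge (a : \bar R) r s : (r%:E <= a)%E -> (a <= s%:E)%E -> r <= fine a.
Proof. by case: a => //= x; rewrite lee_fin. Qed.

Lemma L2E (phi : Omega -> R) : inL2 mu phi ->
  (\int[mu]_x (phi x ^+ 2)%:E)%E = (L2sq mu phi)%:E.
Proof.
move=> [_ h]; rewrite /L2sq fineK // ge0_fin_numE //.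
by apply: integral_ge0 => x _; rewrite lee_fin sqr_ge0.
Qed.

Let S := range (fun x => `|Num.sqrt (H x)|).
Let T := sup S.

Lemma S_ub : has_ubound S.
Proof.
have [B hB] := fbounded.
exists (Num.sqrt (4 * B ^+ 2)) => _ [x _ <-].
rewrite ger0_norm ?sqrtr_ge0 //; apply: ler_wsqrtr.
rewrite HE.
have k a : `|f x - f (ocons a x)| <= 2 * B.
  apply: (le_trans (ler_normB _ _)).
  have := hB x; have := hB (ocons a x); lra.
have k2 a : (f x - f (ocons a x)) ^+ 2 <= 4 * B ^+ 2.
  rewrite -real_normK ?num_real //.
  have := k a; have := normr_ge0 (f x - f (ocons a x)); nra.
have := k2 false; have := k2 true; lra.
Qed.

Lemma H_le x : H x <= T ^+ 2.
Proof.
have h : `|Num.sqrt (H x)| <= T by apply: ub_le_sup S_ub _ _; exists x.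
rewrite ger0_norm ?sqrtr_ge0 // in h.
rewrite -(sqr_sqrtr (H_ge0 x)).
have := sqrtr_ge0 (H x); nra.
Qed.

Lemma T_ge0 : 0 <= T.
Proof.
apply: le_trans (normr_ge0 (Num.sqrt (H point))) _.
by apply: ub_le_sup S_ub _ _; exists point.
Qed.


Lemma upper (p : @pairH R) : inL2 mu p.1 -> inL2 mu p.2 -> Hnorm mu (C p) <= T * Hnorm mu p.
Proof.
move=> h1 h2; have m1 := h1.1; have m2 := h2.1.
have e1 : L2sq mu (C p).1 <= T ^+ 2 * L2sq mu p.2.
  rewrite /L2sq; apply: fine_le.
    by apply: integral_ge0 => x _; rewrite lee_fin sqr_ge0.
  rewrite int_c1 //.
  apply: (@le_trans _ _ (\int[mu]_x ((T ^+ 2)%:E * (p.2 x ^+ 2)%:E))%E).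
    apply: ge0_le_integral => //.
    - by move=> x _; rewrite lee_fin mulr_ge0 // ?H_ge0 ?sqr_ge0.
    - apply/measurable_EFinP; apply: measurable_funM; first exact: mH.
      exact: measurable_funX.
    - apply/measurable_EFinP; apply: measurable_funM; first exact: measurable_cst.
      exact: measurable_funX.
    - by move=> x _; rewrite -EFinM lee_fin ler_wpM2r ?sqr_ge0 ?H_le.
  rewrite ge0_integralZl_EFin //; last 3 first.
  - by move=> x _; rewrite lee_fin sqr_ge0.
  - by apply/measurable_EFinP; exact: measurable_funX.
  - exact: sqr_ge0.
  by rewrite L2E // -EFinM.
have e2 : L2sq mu (C p).2 <= T ^+ 2 * L2sq mu p.1.
  rewrite /L2sq; apply: fine_le.
    by apply: integral_ge0 => x _; rewrite lee_fin sqr_ge0.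
  have mr : measurable_fun setT (ruelle (fun y => p.1 y ^+ 2)).
    by apply: ruelle_meas; exact: measurable_funX.
  apply: (@le_trans _ _ (\int[mu]_x ((T ^+ 2)%:E * (ruelle (fun y => p.1 y ^+ 2) x)%:E))%E).
    apply: ge0_le_integral => //.
    - by move=> x _; rewrite lee_fin sqr_ge0.
    - apply/measurable_EFinP; apply: measurable_funX.
      have h := measurable_funB (@ruelle_meas _ _ (@mult_meas _ _ _ mf m1))
                                (@mult_meas _ _ _ mf (@ruelle_meas _ _ m1)).
      exact: h.
    - apply/measurable_EFinP; apply: measurable_funM; first exact: measurable_cst.
      exact: mr.
    - move=> x _; rewrite -EFinM lee_fin; apply: le_trans (c2_bound p x) _.
      apply: ler_wpM2r; last exact: H_le.
      by rewrite /ruelle divr_ge0 // addr_ge0 // sqr_ge0.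
  rewrite ge0_integralZl_EFin //; last 3 first.
  - by move=> x _; rewrite /ruelle lee_fin divr_ge0 // addr_ge0 // sqr_ge0.
  - by apply/measurable_EFinP; exact: mr.
  - exact: sqr_ge0.
  rewrite (@int_ruelle _ _ hmu (fun y => p.1 y ^+ 2)); last 2 first.
  - exact: measurable_funX.
  - by move=> x; exact: sqr_ge0.
  by rewrite L2E // -EFinM.
rewrite /Hnorm.
apply: le_trans (ler_wsqrtr (_ : _ <= T ^+ 2 * (L2sq mu p.1 + L2sq mu p.2))) _.
  lra.
by rewrite sqrtrM ?sqr_ge0 // sqrtr_sqr ger0_norm // T_ge0.
Qed.

Lemma inL2_0 : inL2 mu (fun _ => 0).
Proof.
split; first exact: measurable_cst.
under eq_integral do rewrite expr0n /=.
by rewrite integral0 ltry.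
Qed.

Lemma Hnorm_ge0 p : 0 <= Hnorm mu p.
Proof. exact: sqrtr_ge0. Qed.

Lemma opnorm_le : opnorm mu C <= T.
Proof.
rewrite /opnorm; apply: ge_sup.
  exists (Hnorm mu (C ((fun _ => 0), (fun _ => 0)))); exists ((fun _ => 0), (fun _ => 0)) => //.
  split; first exact: inL2_0.
  split; first exact: inL2_0.
  rewrite /Hnorm /L2sq /=.
  under eq_integral do rewrite expr0n /=.
  by rewrite integral0 /= addr0 sqrtr0.
move=> _ [p [h1 [h2 hn]] <-].
apply: le_trans (upper p h1 h2) _.
have := T_ge0; have := Hnorm_ge0 p; nra.
Qed.


Lemma c1_int_le (p : @pairH R) : inL2 mu p.2 ->
  (\int[mu]_x (((C p).1 x) ^+ 2)%:E <= (T ^+ 2 * L2sq mu p.2)%:E)%E.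
Proof.
move=> h2; have m2 := h2.1.
  rewrite int_c1 //.
  apply: (@le_trans _ _ (\int[mu]_x ((T ^+ 2)%:E * (p.2 x ^+ 2)%:E))%E).
    apply: ge0_le_integral => //.
    - by move=> x _; rewrite lee_fin mulr_ge0 // ?H_ge0 ?sqr_ge0.
    - apply/measurable_EFinP; apply: measurable_funM; first exact: mH.
      exact: measurable_funX.
    - apply/measurable_EFinP; apply: measurable_funM; first exact: measurable_cst.
      exact: measurable_funX.
    - by move=> x _; rewrite -EFinM lee_fin ler_wpM2r ?sqr_ge0 ?H_le.
  rewrite ge0_integralZl_EFin //; last 3 first.
  - by move=> x _; rewrite lee_fin sqr_ge0.
  - by apply/measurable_EFinP; exact: measurable_funX.
  - exact: sqr_ge0.
  by rewrite L2E // -EFinM.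
Qed.

Let d a : cantor_space -> R := fun y => f y - f (ocons a y).
Let Hc : cantor_space -> R := (d false \* d false + d true \* d true) \* cst 2^-1.

Lemma Hc_cont x : {for x, continuous Hc}.
Proof.
have cd a : {for x, continuous (d a)}.
  have h : {for x, continuous (f - (f \o ocons a))}.
    apply: continuousB; first exact: hf.
    apply: continuous_comp; [exact: ocons_cont | exact: hf].
  exact: h.
apply: continuousM; last exact: cvg_cst.
have h : {for x, continuous (d false \* d false + d true \* d true)}.
  by apply: continuousD; apply: continuousM.
exact: h.
Qed.

Lemma H_Hc : (H : cantor_space -> R) = Hc.
Proof. by apply/funext => y; rewrite HE /Hc /d /= ?fctE /=; rewrite /cst; ring. Qed.

Lemma H_near x0 e : 0 < e -> exists n, forall y, cylinder n x0 y -> H x0 - e < H y.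
Proof.
move=> e0.
have cH : {for x0, continuous (H : cantor_space -> R)} by rewrite H_Hc; exact: Hc_cont.
have hlt : H x0 - e < H x0 by lra.
have := cvgr_gt _ cH _ hlt.
move=> h; have h2 : nbhs (x0 : cantor_space) [set t | H x0 - e < H t] by apply: h; exact: filter_class.
have [n hn] := nbhs_cyl _ _ h2; exists n => y hy; exact: hn.
Qed.


Let OS := [set Hnorm mu (C p) | p in
   [set p : @pairH R | inL2 mu p.1 /\ inL2 mu p.2 /\ Hnorm mu p <= 1]].

Lemma OS_ub : has_ubound OS.
Proof.
exists T => _ [p [h1 [h2 hn]] <-].
apply: le_trans (upper p h1 h2) _.
have := T_ge0; have := Hnorm_ge0 p; nra.
Qed.

Lemma lower x0 : Num.sqrt (H x0) <= opnorm mu C.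
Proof.
set O := opnorm mu C.
have Oub p : inL2 mu p.1 -> inL2 mu p.2 -> Hnorm mu p <= 1 -> Hnorm mu (C p) <= O.
  by move=> h1 h2 hn; apply: ub_le_sup OS_ub _ _; exists p.
have O0 : 0 <= O.
  apply: le_trans (Hnorm_ge0 (C ((fun _ => 0), (fun _ => 0)))) _.
  apply: Oub; [exact: inL2_0 | exact: inL2_0 |].
  rewrite /Hnorm /L2sq /=.
  under eq_integral do rewrite expr0n /=.
  by rewrite integral0 /= addr0 sqrtr0.
suff : H x0 <= O ^+ 2.
  move=> h; rewrite -(ger0_norm O0) -sqrtr_sqr; exact: ler_wsqrtr.
apply/ler_addgt0Pr => e e0.
case: (lerP (H x0) e) => hx.
  have := sqr_ge0 O; lra.
have [n hn] := H_near x0 e e0.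
set c := Num.sqrt (2 ^+ n : R).
pose p2 : Omega -> R := fun y => c * \1_(cylinder n x0) y.
pose p : @pairH R := ((fun _ => 0), p2).
have mcyl := cyl_meas n x0.
have mind : measurable_fun setT (\1_(cylinder n x0) : Omega -> R).
  exact: (@measurable_indic _ _ R setT _ mcyl).
have m2 : measurable_fun setT p2.
  by apply: measurable_funM; [exact: measurable_cst | exact: mind].
have sq y : p2 y ^+ 2 = 2 ^+ n * \1_(cylinder n x0) y.
  rewrite /p2 exprMn sqr_sqrtr ?exprn_ge0 //; congr (_ * _).
  by rewrite /indic; case: (_ \in _); rewrite ?expr1n ?expr0n.
have I2 : (\int[mu]_y (p2 y ^+ 2)%:E = 1%:E)%E.
  under eq_integral do rewrite sq EFinM.
  rewrite ge0_integralZl_EFin //; try by [move=> y _; rewrite lee_fin indic_ge0 | apply/measurable_EFinP | exact: exprn_ge0].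
  rewrite integral_indic // setIT hmu -EFinM mulfV //.
have i2 : inL2 mu p2 by split => //; rewrite I2 ltry.
have hp : Hnorm mu p <= 1.
  rewrite /Hnorm /L2sq /= I2 /=.
  under eq_integral do rewrite expr0n /=.
  by rewrite integral0 /= add0r sqrtr1.
have hC2 : L2sq mu (C p).2 = 0.
  rewrite /L2sq.
  under eq_integral do rewrite comm2 /= !mulr0 addr0 mul0r expr0n /=.
  by rewrite integral0.
have hC1 : H x0 - e <= L2sq mu (C p).1.
  rewrite /L2sq; apply: (fine_ge _ _ _ _ (c1_int_le p i2)).
  rewrite int_c1 //.
  apply: (@le_trans _ _ (\int[mu]_y ((H x0 - e)%:E * (p2 y ^+ 2)%:E))%E); last first.
    apply: ge0_le_integral => //.
    - by move=> y _; rewrite -EFinM lee_fin mulr_ge0 ?sqr_ge0 //; lra.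
    - apply/measurable_EFinP; apply: measurable_funM; first exact: measurable_cst.
      exact: measurable_funX.
    - apply/measurable_EFinP; apply: measurable_funM; first exact: mH.
      exact: measurable_funX.
    - move=> y _; rewrite -EFinM lee_fin !sq /indic.
      case: (boolP (y \in cylinder n x0)) => hy; last by rewrite !mulr0.
      rewrite mulr1; apply: ler_wpM2r; first exact: exprn_ge0.
      apply/ltW/hn; exact: set_mem hy.
  rewrite ge0_integralZl_EFin //; last 3 first.
  - by move=> y _; rewrite lee_fin sqr_ge0.
  - by apply/measurable_EFinP; exact: measurable_funX.
  - lra.
  by rewrite I2 mule1.
have hCO := Oub p inL2_0 i2 hp.
have hCsq : Hnorm mu (C p) ^+ 2 = L2sq mu (C p).1 + L2sq mu (C p).2.
  rewrite /Hnorm sqr_sqrtr // hC2 addr0; lra.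
have := Hnorm_ge0 (C p); nra.
Qed.

Lemma opnorm_eq : opnorm mu C = T.
Proof.
apply/le_anti/andP; split; first exact: opnorm_le.
apply: ge_sup; first by exists `|Num.sqrt (H point)|; exists point.
move=> _ [x _ <-]; rewrite ger0_norm ?sqrtr_ge0 //; exact: lower.
Qed.

End Main.


Theorem proposition2p11 (R : realType) (mu : {measure set Omega -> \bar R})
  (hmu : is_uniform_bernoulli mu)
  (f : cantor_space -> R) (hf : continuous f) :
  opnorm mu (commutator Dop (piop (mult f))) =
    supnorm (fun x => Num.sqrt (ruelle (fun y => `|koopman f y - f y| ^+ 2) x))
  /\
  supnorm (fun x => Num.sqrt (ruelle (fun y => `|koopman f y - f y| ^+ 2) x)) =
    sup (range (fun x : Omega => Num.sqrt (`|f x - f (ocons false x)| ^+ 2 / 2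
                                          + `|f x - f (ocons true x)| ^+ 2 / 2))).
Proof.
split.
  exact: opnorm_eq.
rewrite /supnorm; apply: congr1; apply: congr1; apply/funext => x.
rewrite ger0_norm ?sqrtr_ge0 //; congr Num.sqrt.
by rewrite /ruelle mulrDl.
Qed.
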